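(* Let $f:\mathbb{R}^n\to\mathbb{R}$ be continuously differentiable, let $s$ be a positive integer with $s\le n$, and let $\eta>0$. A point $\mathbf x\in\mathbb{R}^n$ is an $\eta$-stationary point of the problem $\min\{f(\mathbf x):\|\mathbf x\|_0\le s\}$ if and only if there exists $T\in\mathcal{T}(\mathbf x;\eta)$ with $F_\eta(\mathbf x;T)=0$. Furthermore, a point $\mathbf x\in\mathbb{R}^n$ satisfies the fixed-point equation $\mathbf x=\mathcal{P}_s(\mathbf x-\eta\nabla f(\mathbf x))$ (i.e. $\mathcal{P}_s(\mathbf x-\eta\nabla f(\mathbf x))=\{\mathbf x\}$) if and only if $F_\eta(\mathbf x;T)=0$ for every $T\in\mathcal{T}(\mathbf x;\eta)$.
   Context: $\|\mathbf x\|_0$ is the number of nonzero entries of $\mathbf x$; $\mathbf x$ is $s$-sparse if $\|\mathbf x\|_0\le s$; $\mathrm{supp}(\mathbf x)$ is the set of indices of nonzero entries. For $T\subseteq\{1,\dots,n\}$, $T^c=\{1,\dots,n\}\setminus T$, $\mathbf x_T$ is the subvector of $\mathbf x$ indexed by $T$, and $\nabla_T f(\mathbf x)=(\nabla f(\mathbf x))_T$. The hard-thresholding map is the set-valued map $\mathcal{P}_s(\mathbf x)=\mathrm{argmin}_{\mathbf z}\{\|\mathbf x-\mathbf z\|:\|\mathbf z\|_0\le s\}$ (Euclidean norm), i.e. the set of vectors obtained by keeping $s$ largest-magnitude entries of $\mathbf x$ and zeroing the rest. An $s$-sparse vector $\mathbf x^*$ is an $\eta$-stationary point if $\mathbf x^*\in\mathcal{P}_s(\mathbf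 x^*-\eta\nabla f(\mathbf x^* ))$. Define $\mathcal{T}(\mathbf x;\eta)=\{T\subseteq\{1,\dots,n\}: |T|=s,\ T\supseteq\mathrm{supp}(\mathbf z)\text{ for some }\mathbf z\in\mathcal{P}_s(\mathbf x-\eta\nabla f(\mathbf x))\}$, and for $T\in\mathcal{T}(\mathbf x;\eta)$ define $F_\eta(\mathbf x;T)=\begin{bmatrix}\nabla_T f(\mathbf x)\\ \mathbf x_{T^c}\end{bmatrix}\in\mathbb{R}^n$. *)

(* Defs.v *)
From HB Require Import structures.
From mathcomp Require Import all_boot all_order all_algebra.
From mathcomp Require Import all_classical all_reals all_analysis.
Set Implicit Arguments. Unset Strict Implicit. Unset Printing Implicit Defensive.
Import Order.TTheory GRing.Theory Num.Theory.
Import numFieldNormedType.Exports.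
Local Open Scope ring_scope.

Section Defs.
Variable R : realType.
Variable n : nat.

Definition supp (x : 'rV[R]_n) : {set 'I_n} := [set i | x 0 i != 0].

Definition l0 (x : 'rV[R]_n) : nat := #|supp x|.

Definition enorm (x : 'rV[R]_n) : R := Num.sqrt (\sum_i x 0 i ^+ 2).

Definition grad (f : 'rV[R]_n -> R) (x : 'rV[R]_n) : 'rV[R]_n :=
  \row_i ('D_(delta_mx 0 i) f x).

Definition inPs (s : nat) (x z : 'rV[R]_n) : Prop :=
  (l0 z <= s)%N /\
  forall w : 'rV[R]_n, (l0 w <= s)%N -> enorm (x - z) <= enorm (x - w).

Definition eta_stationary (f : 'rV[R]_n -> R) (s : nat) (eta : R) (x : 'rV[R]_n) : Prop :=
  (l0 x <= s)%N /\ inPs s (x - eta *: grad f x) x.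

Definition inTset (f : 'rV[R]_n -> R) (s : nat) (eta : R) (x : 'rV[R]_n)
  (T : {set 'I_n}) : Prop :=
  #|T| = s /\ exists z, inPs s (x - eta *: grad f x) z /\ supp z \subset T.

(* F_eta(x; T) = [grad_T f(x); x_{T^c}] (placed at the respective indices) *)
Definition Feta (f : 'rV[R]_n -> R) (x : 'rV[R]_n) (T : {set 'I_n}) : 'rV[R]_n :=
  \row_i (if i \in T then grad f x 0 i else x 0 i).

End Defs.

(* Main.v *)
Require Import Defs.
From HB Require Import structures.
From mathcomp Require Import all_boot all_order all_algebra.
From mathcomp Require Import all_classical all_reals all_analysis.
From mathcomp Require Import zify.
Import Order.TTheory GRing.Theory Num.Theory.
Import numFieldNormedType.Exports.
Local Open Scope ring_scope.

Section H.
Variable R : realType.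
Variable n : nat.
Implicit Types y z w x g : 'rV[R]_n.

Definition sq (u : 'rV[R]_n) : R := \sum_i u 0 i ^+ 2.

Lemma sq_ge0 u : 0 <= sq u.
Proof. by apply: sumr_ge0 => i _; rewrite sqr_ge0. Qed.

Lemma inPsE s y z : inPs s y z <->
  ((l0 z <= s)%N /\ forall w, (l0 w <= s)%N -> sq (y - z) <= sq (y - w)).
Proof.
rewrite /inPs /enorm; split=> [[h1 h2]|[h1 h2]]; split=> // w hw.
  by have := h2 w hw; rewrite ler_sqrt ?sq_ge0.
by rewrite ler_sqrt ?sq_ge0 //; apply: h2.
Qed.

Lemma not_supp w i : i \notin supp w -> w 0 i = 0.
Proof. by rewrite /supp inE negbK => /eqP. Qed.

Lemma decomp y w (S : {set 'I_n}) : supp w \subset S ->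
  sq (y - w) = \sum_(i in S) (y 0 i - w 0 i) ^+ 2 + \sum_(i in ~: S) y 0 i ^+ 2.
Proof.
move=> hS; rewrite /sq (bigID (mem S)) /=; congr (_ + _).
  by apply: eq_bigr => i _; rewrite !mxE.
apply: eq_big => [i|i hi]; first by rewrite inE.
rewrite !mxE (@not_supp w) ?subr0 //; apply/negP => h; move/negP: hi; apply.
exact: (fintype.subsetP hS _ h).
Qed.

Lemma pert s y z (i : 'I_n) :
  inPs s y z ->
  (l0 (\row_j (if j == i then y 0%R j else z 0%R j)) <= s)%N -> z 0 i = y 0 i.
Proof.
move=> /inPsE [_ h] hw; have := h _ hw.
rewrite /sq (bigD1 i) //= [X in _ <= X](bigD1 i) //= !mxE eqxx subrr expr0n /= add0r.
have -> : \sum_(j | j != i) ((y - \row_j (if j == i then y 0 j else z 0 j)) 0 j)^+2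
   = \sum_(j | j != i) ((y - z) 0 j)^+2.
  by apply: eq_bigr => j hj; rewrite !mxE (negbTE hj).
rewrite gerDr => h2.
have : (y 0 i - z 0 i) ^+ 2 == 0 by rewrite eq_le h2 sqr_ge0.
by rewrite sqrf_eq0 subr_eq0 => /eqP ->.
Qed.

Lemma pert_supp s y z (i : 'I_n) : inPs s y z -> i \in supp z -> z 0 i = y 0 i.
Proof.
move=> hz hi; have [hl _] := (inPsE s y z).1 hz; apply: pert hz _.
apply: leq_trans hl; apply: subset_leq_card; apply/fintype.subsetP => j.
rewrite /supp !inE mxE; case: (j =P i) => [-> _|//]; by move: hi; rewrite inE.
Qed.

Lemma pert_small s y z (i : 'I_n) : inPs s y z -> (l0 z < s)%N -> z 0 i = y 0 i.
Proof.
move=> hz hl; apply: pert hz _.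
apply: leq_trans (_ : (#|i |: supp z| <= s)%N).
  apply: subset_leq_card; apply/fintype.subsetP => j.
  rewrite /supp !inE mxE; case: (j =P i) => [-> _|] //.
rewrite cardsU1; apply: leq_trans (leq_add (leq_b1 _) (leqnn _)) _; rewrite add1n; exact: hl.
Qed.

Lemma extend_set s (S : {set 'I_n}) : (#|S| <= s)%N -> (s <= n)%N ->
  exists T : {set 'I_n}, S \subset T /\ #|T| = s.
Proof.
move=> h1 h2; move: {2}(s - #|S|)%N (erefl (s - #|S|)%N) => k.
elim: k S h1 => [|k IH] S h1 hk.
  exists S; split=> //; apply/eqP; rewrite eqn_leq h1 /=.
  by rewrite -subn_eq0 hk.
have hlt : (#|S| < n)%N.
  apply: leq_trans h2; rewrite -subn_gt0 hk //.
have : ~: S != finset.set0.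
  rewrite -card_gt0; have hc := cardsC S; rewrite card_ord in hc; lia.
case/set0Pn => i; rewrite inE => hi.
have c1 : (#|i |: S| <= s)%N by rewrite cardsU1 hi add1n -subn_gt0 hk.
have c2 : (s - #|i |: S|)%N = k by rewrite cardsU1 hi add1n; lia.
have [T [hT1 hT2]] := IH (i |: S) c1 c2.
exists T; split=> //; exact: (fintype.subset_trans (finset.subsetUr _ _) hT1).
Qed.


Lemma exists_Ps s y : exists z, inPs s y z.
Proof.
pose cost (T : {set 'I_n}) := \sum_(i in ~: T) y 0 i ^+ 2.
pose P : pred {set 'I_n} := fun T => (#|T| <= s)%N.
have P0 : P finset.set0 by rewrite /P cards0.
case: (arg_minP cost P0) => T hT hmin.
pose z := \row_i (if i \in T then y 0 i else 0).
have hsup : supp z \subset T.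
  by apply/fintype.subsetP => i; rewrite /supp inE mxE; case: ifP => // _; rewrite eqxx.
exists z; apply/inPsE; split.
  by apply: leq_trans hT; apply: subset_leq_card.
move=> w hw; rewrite (decomp _ _ _ hsup) (decomp _ _ _ (subxx (supp w))).
rewrite big1 ?add0r => [|i hi]; last by rewrite mxE hi subrr expr0n.
apply: le_trans (hmin _ hw) _; rewrite lerDr.
by apply: sumr_ge0 => i _; rewrite sqr_ge0.
Qed.

Lemma sq_x x g (eta : R) (T : {set 'I_n}) :
  (forall i, i \in T -> g 0 i = 0) -> (forall i, i \notin T -> x 0 i = 0) ->
  sq (x - eta *: g - x) = \sum_(i in ~: T) (x - eta *: g) 0 i ^+ 2.
Proof.
move=> hg hx.
have hs : supp x \subset T.
  apply/fintype.subsetP => i; rewrite /supp inE; apply: contraR => /hx ->.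
  by rewrite eqxx.
rewrite (decomp _ _ _ hs) big1 ?add0r // => i hi.
by rewrite !mxE hg // mulr0 subr0 subrr expr0n.
Qed.

Lemma lemA x g (eta : R) s (T : {set 'I_n}) : eta != 0 ->
  inPs s (x - eta *: g) x -> supp x \subset T -> #|T| = s ->
  forall i, i \in T -> g 0 i = 0.
Proof.
move=> heta hP hsub hT i hi.
suff h : x 0 i = (x - eta *: g) 0 i.
  move: h; rewrite !mxE => /eqP; rewrite eq_sym subr_eq addrC -subr_eq subrr.
  by rewrite eq_sym mulf_eq0 (negbTE heta) /= => /eqP.
have [hl|hl] := ltnP (l0 x) s; first exact: pert_small hP hl.
have /eqP eqT : supp x == T by rewrite eqEcard hsub hT.
by apply: pert_supp hP _; rewrite eqT.
Qed.

Lemma lemB x g (eta : R) s (T : {set 'I_n}) z :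
  #|T| = s -> inPs s (x - eta *: g) z -> supp z \subset T ->
  (forall i, i \in T -> g 0 i = 0) -> (forall i, i \notin T -> x 0 i = 0) ->
  inPs s (x - eta *: g) x.
Proof.
move=> hT hz hzT hg hx.
have hs : supp x \subset T.
  apply/fintype.subsetP => i; rewrite /supp inE; apply: contraR => /hx ->.
  by rewrite eqxx.
have [_ hzm] := (inPsE _ _ _).1 hz.
apply/inPsE; split; first by rewrite /l0 -hT; apply: subset_leq_card.
move=> w hw; apply: le_trans (hzm _ hw).
rewrite (sq_x _ _ _ _ hg hx) (decomp _ _ _ hzT) lerDr.
by apply: sumr_ge0 => i _; rewrite sqr_ge0.
Qed.

Lemma lemC x g (eta : R) s (T : {set 'I_n}) z :
  inPs s (x - eta *: g) z -> supp z \subset T -> (l0 x <= s)%N ->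
  (forall i, i \in T -> g 0 i = 0) -> (forall i, i \notin T -> x 0 i = 0) ->
  z = x.
Proof.
move=> hz hzT hlx hg hx.
have [_ hzm] := (inPsE _ _ _).1 hz.
have := hzm _ hlx; rewrite (sq_x _ _ _ _ hg hx) (decomp _ _ _ hzT) gerDr => hle.
apply/rowP => i; case: (boolP (i \in T)) => hi.
  have : ((x - eta *: g) 0 i - z 0 i) ^+ 2 <= 0.
    apply: le_trans hle; rewrite (bigD1 i) //= lerDl.
    by apply: sumr_ge0 => j _; rewrite sqr_ge0.
  move=> h; have : ((x - eta *: g) 0 i - z 0 i) ^+ 2 == 0.
    by rewrite eq_le h sqr_ge0.
  rewrite sqrf_eq0 subr_eq0 => /eqP <-.
  by rewrite !mxE hg // mulr0 subr0.
rewrite hx // not_supp //; apply: contra hi; exact: (fintype.subsetP hzT).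
Qed.

End H.

Arguments lemA {R n x g eta s T}.
Arguments lemB {R n x g eta s T z}.
Arguments lemC {R n x g eta s T z}.
Arguments extend_set {n s S}.
Arguments inPsE {R n s y z}.

Lemma FetaE (R : realType) (n : nat) (f : 'rV[R]_n -> R) x (T : {set 'I_n}) :
  Feta f x T = 0 <->
  ((forall i, i \in T -> grad f x 0 i = 0) /\ (forall i, i \notin T -> x 0 i = 0)).
Proof.
split.
  move=> h; split=> i hi; have := congr1 (fun M : 'rV_n => M 0 i) h;
  by rewrite /grad /= !mxE ?hi ?(negbTE hi).
move=> [hg hx]; apply/rowP => i; rewrite [LHS]mxE [RHS]mxE.
by case: ifP => hi; [apply: hg | apply: hx; rewrite hi].
Qed.

Theorem lemma4 (R : realType) (n : nat) (f : 'rV[R]_n -> R)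
  (hdiff : forall x : 'rV[R]_n, differentiable f x)
  (hcont : continuous (grad f))
  (s : nat) (hs0 : (0 < s)%N) (hsn : (s <= n)%N)
  (eta : R) (heta : 0 < eta) :
  (forall x : 'rV[R]_n,
     eta_stationary f s eta x <->
     exists T : {set 'I_n}, inTset f s eta x T /\ Feta f x T = 0) /\
  (forall x : 'rV[R]_n,
     (forall z : 'rV[R]_n, inPs s (x - eta *: grad f x) z <-> z = x) <->
     (forall T : {set 'I_n}, inTset f s eta x T -> Feta f x T = 0)).
Proof.
have he : eta != 0 by rewrite gt_eqF.
have outT : forall (x : 'rV[R]_n) (T : {set 'I_n}), supp x \subset T ->
    forall i, i \notin T -> x 0 i = 0.
  move=> x T hsub i hi; apply: not_supp; apply/negP => h; move/negP: hi; apply.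
  exact: (fintype.subsetP hsub _ h).
split=> x; split.
- move=> [hl hP].
  have [T [hsub hT]] := extend_set hl hsn.
  exists T; split; first by split=> //; exists x.
  apply/FetaE; split; first exact: lemA he hP hsub hT.
  exact: outT hsub.
- move=> [T [[hT [z [hz hzT]]] /FetaE [hg hx]]].
  have hP := lemB hT hz hzT hg hx.
  by split=> //; have [] := inPsE.1 hP.
- move=> H T [hT [z [hz hzT]]].
  have ezx := (H z).1 hz; subst z.
  have hP := (H x).2 erefl.
  apply/FetaE; split; first exact: lemA he hP hzT hT.
  exact: outT hzT.
- move=> H.
  have [z0 hz0] := @exists_Ps R n s (x - eta *: grad f x).
  have [l0z0 _] := inPsE.1 hz0.
  have [T [hsub hT]] := extend_set l0z0 hsn.
  have [hg hx] := (@FetaE R n f x T).1 (H T (conj hT (ex_intro _ z0 (conj hz0 hsub)))).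
  have hP := lemB hT hz0 hsub hg hx.
  have [hlx _] := inPsE.1 hP.
  move=> z; split=> [hz|->//].
  have [lz _] := inPsE.1 hz.
  have [T' [hsub' hT']] := extend_set lz hsn.
  have [hg' hx'] := (@FetaE R n f x T').1 (H T' (conj hT' (ex_intro _ z (conj hz hsub')))).
  exact: lemC hz hsub' hlx hg' hx'.
Qed.
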